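(* There is a constant $c$ such that for every $i\in\mathbb{N}$ there is a monadic second order (MSO) formula $\xi_i(X)$ over the vocabulary $\{Oc,\overline{Oc},Cl,Lt,U,B_\Box,D_\Diamond\}\cup\{Lv_j : j\ge 0\}$, with one free set variable $X$ and of length at most $c(i+1)$, with the following property. For every modal CNF formula $\phi$ with $\mathrm{md}(\phi)\ge i$ and every set $C$ of domain elements of $\mathcal{S}(\phi)$ that represent clauses at level $i$ of $\phi$, the formula $\mathrm{CNF}(C)$ is satisfiable (at some world of some Kripke model, with no restriction on the accessibility relation) if and only if $\mathcal{S}(\phi)\models \xi_i(C)$.
   Context: Modal formulas are built from propositional variables, $\bot$, $\neg$, $\lor$, $\Diamond$, $\Box$, and are evaluated in Kripke models $(W,\mapsto,V)$ in the standard way. A formula is satisfiable if it holds at some world of some Kripke model. The modal depth $\mathrm{md}$ is defined by: $\mathrm{md}(q)=\mathrm{md}(\bot)=0$, $\mathrm{md}(\neg\phi)=\mathrm{md}(\phi)$, $\mathrm{md}(\phi\lor\psi)=\max(\mathrm{md}(\phi),\mathrm{md}(\psi))$, $\mathrm{md}(\Diamond\phi)=\mathrm{md}(\Box\phi)=\mathrm{md}(\phi)+1$. Modal CNF: literal ::= $q$ | $\neg q$ | $\Box$clause | $\Diamond$CNF; clause ::= literal | clause $\lor$ clause | $\bot$; CNF ::= clause | CNF $\wedge$ CNF, where $q$ ranges over propositional variables. It is assumed that $\bot$ occurs only inside subformulas of the form $\Box\bot$. Levels: if $\phi=\mathrm{clause}_1\wedge\dots\wedge\mathrm{clause}_m$,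 these clauses and all literals occurring in them (directly, as disjuncts) are at level $\mathrm{md}(\phi)$. If $\Box\,\mathrm{clause}_1$ is a literal at level $i$, then $\mathrm{clause}_1$ and its literals are at level $i-1$. If $\Diamond(\mathrm{clause}_1\wedge\dots\wedge\mathrm{clause}_{m'})$ is a literal at level $i$, these clauses and their literals are at level $i-1$. The relational structure $\mathcal{S}(\phi)$: its domain has one element for every occurrence of a clause in $\phi$, one element for every occurrence of a literal of the form $\Box$clause or $\Diamond$CNF, and one element for every propositional variable of $\phi$ (all occurrences of a variable share this element); there are no elements for $\bot$. Binary relations: $\overline{Oc}(e_1,e_2)$ iff $e_1$ represents a clause and $e_2$ a propositional variable occurring negated as a literal of that clause. $Oc(e_1,e_2)$ iff either $e_1$ represents a clause and $e_2$ represents a literal of that clause of the form $\Box$clause, $\Diamond$CNF or a non-negated variable; or $e_1$ represents a literal $\Box$clause and $e_2$ represents that clause; or $e_1$ represents a literal $\Diamond$CNF and $e_2$ represents a clause of that CNF. Unary relations: $Cl$ (elements representing clauses), $Lt$ (elements representing literals, including variables), $U$ (literals of the form $\Box\bot$), $B_\Box$ (literals of the form $\Box$clause), $D_\Diamond$ (literals of the form $\Diamond$CNF), and $Lv_j$ for $0\le j\le\mathrm{md}(\phi)$ (clauses and literals at level $j$). For a set $C$ of clause elements, $\mathrm{CNF}(C)$ denotes the conjunction of the clauses represented by elements of $C$. *)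

(* Defs.v *)
From HB Require Import structures.
From mathcomp Require Import all_boot.

Set Implicit Arguments.
Unset Strict Implicit.
Unset Printing Implicit Defensive.

Inductive form : Type :=
| FVar of nat
| FBot
| FNeg of form
| FOr of form & form
| FDia of form
| FBox of form.

Definition FAnd (a b : form) : form := FNeg (FOr (FNeg a) (FNeg b)).
Definition FTop : form := FNeg FBot.

Fixpoint md (f : form) : nat :=
  match f with
  | FVar _ | FBot => 0
  | FNeg g => md g
  | FOr g h => maxn (md g) (md h)
  | FDia g | FBox g => (md g).+1
  end.

Fixpoint holds (W : Type) (R : W -> W -> Prop) (V : nat -> W -> Prop)
    (w : W) (f : form) : Prop :=
  match f with
  | FVar q => V q w
  | FBot => False
  | FNeg g => ~ holds R V w g
  | FOr g h => holds R V w g \/ holds R V w h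
  | FDia g => exists v, R w v /\ holds R V v g
  | FBox g => forall v, R w v -> holds R V v g
  end.

Definition satisfiable (f : form) : Prop :=
  exists (W : Type) (R : W -> W -> Prop) (V : nat -> W -> Prop) (w : W),
    holds R V w f.

(* A clause is the list of its literals (disjuncts); the empty clause is bot
   (only allowed directly under Box, see [wf_cnf]). *)
Inductive lit : Type :=
| LPos of nat
| LNeg of nat
| LBox of seq lit
| LDia of seq (seq lit).

Definition clause := seq lit.
Definition cnf := seq clause.

Fixpoint disj (fs : seq form) : form :=
  match fs with
  | [::] => FBot
  | [:: f] => f
  | f :: fs' => FOr f (disj fs')
  end.

Fixpoint conj (fs : seq form) : form :=
  match fs with
  | [::] => FTop
  | [:: f] => f
  | f :: fs' => FAnd f (conj fs')
  end.

Fixpoint tr_lit (l : lit) : form :=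
  match l with
  | LPos q => FVar q
  | LNeg q => FNeg (FVar q)
  | LBox c => FBox (disj (map tr_lit c))
  | LDia f => FDia (conj (map (fun c => disj (map tr_lit c)) f))
  end.

Definition tr_clause (c : clause) : form := disj (map tr_lit c).
Definition tr_cnf (f : cnf) : form := conj (map tr_clause f).

Definition md_cnf (phi : cnf) : nat := md (tr_cnf phi).

(* Positions (occurrences) inside a CNF are addressed by paths of indices:
   a top clause is [:: k]; literal j of the clause at path p is [rcons p j];
   the clause of a Box literal at path r is [rcons r 0]; clause k of the CNF
   of a Dia literal at path r is [rcons r k].  Along the path we count the
   number of modal operators entered (the nesting depth). *)
Inductive obj : Type :=
| OCnf of cnf
| OCl of clause
| OLit of lit.

Definition step (o : obj) (k : nat) : option (obj * nat) :=
  match o with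
  | OCnf f => if k < size f then Some (OCl (nth [::] f k), 0) else None
  | OCl c => if k < size c then Some (OLit (nth (LPos 0) c k), 0) else None
  | OLit (LBox c) =>
      (* Box bot: the bot has no element *)
      if c is [::] then None else if k == 0 then Some (OCl c, 1) else None
  | OLit (LDia f) => if k < size f then Some (OCl (nth [::] f k), 1) else None
  | OLit _ => None
  end.

Fixpoint at_path (o : obj) (p : seq nat) : option (obj * nat) :=
  match p with
  | [::] => Some (o, 0)
  | k :: p' =>
      match step o k with
      | Some (o', d) =>
          match at_path o' p' with
          | Some (o'', d') => Some (o'', d + d')
          | None => None
          end
      | None => None
      end
  end.

Definition occ (phi : cnf) (p : seq nat) := at_path (OCnf phi) p.

(* Well-formed modal CNF: nonempty conjunctions, nonempty clauses, except that
   bot may occur (only) as the clause of Box bot. *)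
Definition wf_cnf (phi : cnf) : Prop :=
  phi <> [::] /\
  (forall p c d, occ phi p = Some (OCl c, d) -> c <> [::]) /\
  (forall p f d, occ phi p = Some (OLit (LDia f), d) -> f <> [::]).

Inductive node : Type :=
| NCl of seq nat
| NLt of seq nat
| NVar of nat.

Definition node_enc (e : node) : (seq nat + seq nat) + nat :=
  match e with
  | NCl p => inl (inl p)
  | NLt p => inl (inr p)
  | NVar q => inr q
  end.
Definition node_dec (x : (seq nat + seq nat) + nat) : node :=
  match x with
  | inl (inl p) => NCl p
  | inl (inr p) => NLt p
  | inr q => NVar q
  end.
Lemma node_encK : cancel node_enc node_dec. Proof. by case. Qed.
HB.instance Definition _ := Equality.copy node (can_type node_encK).

Section Structure.
Variable phi : cnf.

Definition is_cl (p : seq nat) : Prop :=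
  exists c d, occ phi p = Some (OCl c, d).
Definition is_box (r : seq nat) : Prop :=
  exists c d, occ phi r = Some (OLit (LBox c), d).
Definition is_dia (r : seq nat) : Prop :=
  exists f d, occ phi r = Some (OLit (LDia f), d).
Definition is_mlit (r : seq nat) : Prop := is_box r \/ is_dia r.
Definition occurs_var (q : nat) : Prop :=
  exists p d, occ phi p = Some (OLit (LPos q), d) \/
              occ phi p = Some (OLit (LNeg q), d).

Definition in_dom (e : node) : Prop :=
  match e with
  | NCl p => is_cl p
  | NLt r => is_mlit r
  | NVar q => occurs_var q
  end.

Definition relCl (e : node) : Prop :=
  if e is NCl p then is_cl p else False.
Definition relLt (e : node) : Prop :=
  match e with
  | NCl _ => False
  | NLt r => is_mlit r
  | NVar q => occurs_var q
  end.
Definition relU (e : node) : Prop :=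
  if e is NLt r then exists d, occ phi r = Some (OLit (LBox [::]), d) else False.
Definition relB (e : node) : Prop :=
  if e is NLt r then is_box r else False.
Definition relD (e : node) : Prop :=
  if e is NLt r then is_dia r else False.
Definition relLv (j : nat) (e : node) : Prop :=
  match e with
  | NCl p => exists c d, occ phi p = Some (OCl c, d) /\ j = md_cnf phi - d
  | NLt r => is_mlit r /\ exists o d, occ phi r = Some (o, d) /\ j = md_cnf phi - d
  | NVar q => exists p d, (occ phi p = Some (OLit (LPos q), d) \/
                          occ phi p = Some (OLit (LNeg q), d)) /\
                         j = md_cnf phi - d
  end.

Definition relOc (e1 e2 : node) : Prop :=
  (exists p j, e1 = NCl p /\ e2 = NLt (rcons p j) /\ is_cl p /\ is_mlit (rcons p j))
  \/ (exists p j q d, e1 = NCl p /\ e2 = NVar q /\ is_cl p /\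
        occ phi (rcons p j) = Some (OLit (LPos q), d))
  \/ (exists r k, e1 = NLt r /\ e2 = NCl (rcons r k) /\ is_mlit r /\ is_cl (rcons r k)).

Definition relOcBar (e1 e2 : node) : Prop :=
  exists p j q d, e1 = NCl p /\ e2 = NVar q /\ is_cl p /\
    occ phi (rcons p j) = Some (OLit (LNeg q), d).

Definition clause_of (e : node) : clause :=
  if e is NCl p then
    (if occ phi p is Some (OCl c, _) then c else [::])
  else [::].

Definition CNF_of (C : seq node) : form :=
  conj (map (fun e => tr_clause (clause_of e)) C).

End Structure.

Inductive usym : Type := SCl | SLt | SU | SBox | SDia | SLv of nat.
Inductive bsym : Type := SOc | SOcBar.

Inductive mso : Type :=
| MRel1 of usym & nat
| MRel2 of bsym & nat & nat
| MEq of nat & nat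
| MIn of nat & nat            (* MIn x X : x \in X *)
| MNeg of mso
| MOr of mso & mso
| MEx of nat & mso
| MExS of nat & mso.

(* length = number of symbols (each atom counts as one symbol) *)
Fixpoint mso_len (f : mso) : nat :=
  match f with
  | MRel1 _ _ | MRel2 _ _ _ | MEq _ _ | MIn _ _ => 1
  | MNeg g => (mso_len g).+1
  | MOr g h => (mso_len g + mso_len h).+1
  | MEx _ g | MExS _ g => (mso_len g).+1
  end.

Fixpoint fv1 (f : mso) : seq nat :=
  match f with
  | MRel1 _ x => [:: x]
  | MRel2 _ x y => [:: x; y]
  | MEq x y => [:: x; y]
  | MIn x _ => [:: x]
  | MNeg g => fv1 g
  | MOr g h => fv1 g ++ fv1 h
  | MEx x g => [seq y <- fv1 g | y != x]
  | MExS _ g => fv1 g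
  end.

Fixpoint fv2 (f : mso) : seq nat :=
  match f with
  | MIn _ X => [:: X]
  | MRel1 _ _ | MRel2 _ _ _ | MEq _ _ => [::]
  | MNeg g => fv2 g
  | MOr g h => fv2 g ++ fv2 h
  | MEx _ g => fv2 g
  | MExS X g => [seq Y <- fv2 g | Y != X]
  end.

Definition only_free_X (f : mso) : Prop :=
  fv1 f = [::] /\ all (fun Y => Y == 0) (fv2 f).

Record rstruct := RStruct {
  carrier : Type;
  dom : carrier -> Prop;
  interp1 : usym -> carrier -> Prop;
  interp2 : bsym -> carrier -> carrier -> Prop
}.

Definition upd (A : Type) (e : nat -> A) (x : nat) (v : A) : nat -> A :=
  fun y => if y == x then v else e y.

Fixpoint msat (M : rstruct) (e1 : nat -> option (carrier M))
    (e2 : nat -> carrier M -> Prop) (f : mso) : Prop :=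
  match f with
  | MRel1 P x => exists a, e1 x = Some a /\ @interp1 M P a
  | MRel2 R x y => exists a b, e1 x = Some a /\ e1 y = Some b /\ @interp2 M R a b
  | MEq x y => exists a b, e1 x = Some a /\ e1 y = Some b /\ a = b
  | MIn x X => exists a, e1 x = Some a /\ e2 X a
  | MNeg g => ~ @msat M e1 e2 g
  | MOr g h => @msat M e1 e2 g \/ @msat M e1 e2 h
  | MEx x g => exists a, @dom M a /\ @msat M (upd e1 x (Some a)) e2 g
  | MExS X g => exists S : carrier M -> Prop,
                  (forall a, S a -> @dom M a) /\ @msat M e1 (upd e2 X S) g
  end.

Definition S_of (phi : cnf) : rstruct :=
  {| carrier := node;
     dom := in_dom phi;
     interp1 := fun P => match P with
                         | SCl => relCl phi
                         | SLt => relLt phi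
                         | SU => relU phi
                         | SBox => relB phi
                         | SDia => relD phi
                         | SLv j => relLv phi j
                         end;
     interp2 := fun R => match R with
                         | SOc => relOc phi
                         | SOcBar => relOcBar phi
                         end |}.

Definition models_with (phi : cnf) (xi : mso) (C : seq node) : Prop :=
  @msat (S_of phi) (fun _ => None)
       (fun X => if X == 0 then (fun e : node => is_true (e \in C)) else (fun _ : node => False)) xi.

(* Main.v *)
Require Import Defs.
From HB Require Import structures.
From mathcomp Require Import all_boot.
From Stdlib Require Import Classical ClassicalEpsilon Lia.
Import Defs.
Set Implicit Arguments.
Unset Strict Implicit.


Section Hold.
Variables (W : Type) (R : W -> W -> Prop) (V : nat -> W -> Prop).

Lemma holds_disj0 (l : seq form) w :
  holds R V w (disj l) <-> exists j, j < size l /\ holds R V w (nth FBot l j).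
Proof.
elim: l => [|a l IH].
  by split => // [[j []]].
case: l IH => [|b l] IH.
  split => [H|[j [Hj H]]]; first by exists 0.
  by case: j Hj H.
change (holds R V w a \/ holds R V w (disj (b :: l)) <->
   exists j, j < (size l).+2 /\ holds R V w (nth FBot [:: a, b & l] j)).
rewrite IH; split.
  case=> [H|[j [Hj H]]]; first by exists 0.
  by exists j.+1.
by case=> [[|j]] [Hj H] /=; [left | right; exists j].
Qed.

Lemma holds_FAnd w a b : holds R V w (FAnd a b) <-> holds R V w a /\ holds R V w b.
Proof.
rewrite /FAnd /=; split.
  move=> H; split; apply: NNPP => H'; apply: H; tauto.
tauto.
Qed.

Lemma holds_conj0 (l : seq form) w :
  holds R V w (conj l) <-> forall j, j < size l -> holds R V w (nth FBot l j).
Proof.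
elim: l => [|a l IH].
  by split => //= _ ? .
case: l IH => [|b l] IH.
  split => [H|H]; last exact: (H 0 isT).
  by case.
change (holds R V w (FAnd a (conj (b :: l))) <->
   forall j, j < (size l).+2 -> holds R V w (nth FBot [:: a, b & l] j)).
rewrite holds_FAnd IH; split.
  by case=> H1 H2 [|j] Hj //=; apply: H2.
move=> H; split; first exact: (H 0).
by move=> j Hj; apply: (H j.+1).
Qed.

Lemma holds_disj A (x0 : A) (F : A -> form) (l : seq A) w :
  holds R V w (disj (map F l)) <-> exists j, j < size l /\ holds R V w (F (nth x0 l j)).
Proof.
rewrite holds_disj0 size_map; split=> -[j [Hj H]]; exists j; split => //.
  by move: H; rewrite (nth_map x0).
by rewrite (nth_map x0).
Qed.

Lemma holds_conj A (x0 : A) (F : A -> form) (l : seq A) w :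
  holds R V w (conj (map F l)) <-> forall j, j < size l -> holds R V w (F (nth x0 l j)).
Proof.
rewrite holds_conj0 size_map; split=> H j Hj.
  by move: (H j Hj); rewrite (nth_map x0).
by rewrite (nth_map x0) //; apply: H.
Qed.

End Hold.

Lemma at_path_rcons o p j :
  at_path o (rcons p j) =
  match at_path o p with
  | Some (o', d) => match step o' j with
                    | Some (o'', d') => Some (o'', d + d')
                    | None => None end
  | None => None end.
Proof.
elim: p o => [|k p IH] o /=.
  by case: (step o j) => [[o' d]|] //; rewrite addn0.
case: (step o k) => [[o' d]|] //; rewrite IH.
case: (at_path o' p) => [[o'' d']|] //.
by case: (step o'' j) => [[o3 d3]|] //; rewrite addnA.
Qed.

Lemma occ_rcons_inv phi p j o d :
  occ phi (rcons p j) = Some (o, d) ->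
  exists o' d1 d2, occ phi p = Some (o', d1) /\ step o' j = Some (o, d2) /\ d = d1 + d2.
Proof.
rewrite /occ at_path_rcons.
case: (at_path _ p) => [[o' d1]|] //.
case E: (step o' j) => [[o'' d2]|] // [<- <-].
by exists o', d1, d2.
Qed.

Lemma occ_rcons phi p j o d o' d' :
  occ phi p = Some (o, d) -> step o j = Some (o', d') ->
  occ phi (rcons p j) = Some (o', d + d').
Proof. by rewrite /occ at_path_rcons => -> ->. Qed.

Definition mdo (o : obj) : nat :=
  match o with
  | OCnf f => md (tr_cnf f)
  | OCl c => md (tr_clause c)
  | OLit l => md (tr_lit l)
  end.

Lemma md_conj0 (l : seq form) j : j < size l -> md (nth FBot l j) <= md (conj l).
Proof.
elim: l j => [|a l IH] [|j] //.
  by case: l IH => [|b l] IH //= _; rewrite leq_maxl.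
case: l IH => [|b l] IH //= Hj.
have := IH j Hj => /= H.
exact: (leq_trans H (leq_maxr _ _)).
Qed.

Lemma md_disj0 (l : seq form) j : j < size l -> md (nth FBot l j) <= md (disj l).
Proof.
elim: l j => [|a l IH] [|j] //.
  by case: l IH => [|b l] IH //= _; rewrite leq_maxl.
case: l IH => [|b l] IH //= Hj.
have := IH j Hj => /= H.
exact: (leq_trans H (leq_maxr _ _)).
Qed.

Lemma step_md o k o' d : step o k = Some (o', d) -> d + mdo o' <= mdo o.
Proof.
case: o => [f|c|[q|q|c|f]] /=.
- case: ifP => // Hk [<- <-] /=; rewrite add0n /tr_cnf.
  have := md_conj0 (l := map tr_clause f) (j := k); rewrite size_map (nth_map [::]) //.
  by apply.
- case: ifP => // Hk [<- <-] /=; rewrite add0n /tr_clause.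
  have := md_disj0 (l := map tr_lit c) (j := k); rewrite size_map (nth_map (LPos 0)) //.
  by apply.
- by [].
- by [].
- by case: c => // a c; case: ifP => // _ [<- <-].
- case: ifP => // Hk [<- <-] /=.
  have := md_conj0 (l := map tr_clause f) (j := k); rewrite size_map (nth_map [::]) //.
  by apply.
Qed.

Lemma at_path_md o p o' d : at_path o p = Some (o', d) -> d + mdo o' <= mdo o.
Proof.
elim: p o o' d => [|k p IH] o o' d /=.
  by case=> <- <-.
case E: (step o k) => [[o1 d1]|] //.
case E2: (at_path o1 p) => [[o2 d2]|] // [<- <-].
have H1 := step_md E; have H2 := IH _ _ _ E2.
rewrite -addnA; apply: leq_trans H1.
by rewrite leq_add2l.
Qed.

Lemma dia_depth phi r f d : occ phi r = Some (OLit (LDia f), d) -> d < md_cnf phi.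
Proof.
move/at_path_md => /= H.
apply: leq_trans H; rewrite /= addnS ltnS; exact: leq_addr.
Qed.

Definition MAnd a b := MNeg (MOr (MNeg a) (MNeg b)).
Definition MImp a b := MOr (MNeg a) b.
Definition MAll x a := MNeg (MEx x (MNeg a)).
Definition MAllS X a := MNeg (MExS X (MNeg a)).
Definition MIff a b := MAnd (MImp a b) (MImp b a).
Arguments MAnd : simpl never.
Arguments MImp : simpl never.
Arguments MAll : simpl never.
Arguments MAllS : simpl never.
Arguments MIff : simpl never.

Section MS.
Variable M : rstruct.
Local Notation msat := (@msat M).

Lemma msat_and (e1 : nat -> option (carrier M)) (e2 : nat -> carrier M -> Prop) a b : msat e1 e2 (MAnd a b) <-> msat e1 e2 a /\ msat e1 e2 b.
Proof. rewrite /MAnd /=; split; [move=> H; split; apply: NNPP; tauto | tauto]. Qed.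
Lemma msat_imp (e1 : nat -> option (carrier M)) (e2 : nat -> carrier M -> Prop) a b : msat e1 e2 (MImp a b) <-> (msat e1 e2 a -> msat e1 e2 b).
Proof. rewrite /MImp /=; split; [tauto | move=> H; apply: NNPP; tauto]. Qed.
Lemma msat_iff (e1 : nat -> option (carrier M)) (e2 : nat -> carrier M -> Prop) a b : msat e1 e2 (MIff a b) <-> (msat e1 e2 a <-> msat e1 e2 b).
Proof. rewrite /MIff msat_and !msat_imp; tauto. Qed.
Lemma msat_all (e1 : nat -> option (carrier M)) (e2 : nat -> carrier M -> Prop) x a : msat e1 e2 (MAll x a) <->
  forall v, @dom M v -> msat (upd e1 x (Some v)) e2 a.
Proof.
rewrite /MAll /=; split.
  move=> H v Hv; apply: NNPP => H'; apply: H; by exists v.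
by move=> H [v [Hv H']]; apply: H'; apply: H.
Qed.
Lemma msat_allS (e1 : nat -> option (carrier M)) (e2 : nat -> carrier M -> Prop) X a : msat e1 e2 (MAllS X a) <->
  forall S, (forall v, S v -> @dom M v) -> msat e1 (upd e2 X S) a.
Proof.
rewrite /MAllS /=; split.
  move=> H S HS; apply: NNPP => H'; apply: H; by exists S.
by move=> H [S [HS H']]; apply: H'; apply: H.
Qed.
End MS.
Opaque MAnd MImp MAll MAllS MIff.

Lemma ex_some A (a : A) (P : A -> Prop) : (exists b, Some a = Some b /\ P b) <-> P a.
Proof. by split => [[b [[->]]]|H] //; exists a. Qed.
Lemma ex_some2 A (a a' : A) (P : A -> A -> Prop) :
  (exists b b', Some a = Some b /\ Some a' = Some b' /\ P b b') <-> P a a'.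
Proof. by split => [[b [b' [[->] [[->]]]]]|H] //; exists a, a'. Qed.

Definition A1 := MAll 0 (MImp (MIn 0 0) (MEx 1 (MOr (MAnd (MRel2 SOc 0 1) (MIn 1 1))
                                                  (MAnd (MRel2 SOcBar 0 1) (MIn 1 2))))).
Definition A2 := MAll 1 (MNeg (MAnd (MIn 1 1) (MIn 1 2))).
Definition A3 := MAll 2 (MImp (MAnd (MIn 2 1) (MRel1 SDia 2))
                    (MAll 3 (MImp (MIn 3 1) (MNeg (MRel1 SU 3))))).
Definition A4 r := MAll 2 (MImp (MAnd (MIn 2 1) (MRel1 SDia 2)) r).
Definition Zdef := MAll 4 (MIff (MIn 4 0) (MOr (MRel2 SOc 2 4)
                     (MEx 5 (MAnd (MIn 5 1) (MAnd (MRel1 SBox 5) (MRel2 SOc 5 4)))))).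

Fixpoint xi (k : nat) : mso :=
  MExS 1 (MExS 2 (MAnd A1 (MAnd A2 (MAnd A3 (A4
     match k with
     | 0 => MNeg (MEq 2 2)
     | k'.+1 => MAllS 0 (MImp Zdef (xi k'))
     end))))).

Fixpoint sem (phi : cnf) (k : nat) (X : node -> Prop) : Prop :=
  exists Y, (forall a, Y a -> in_dom phi a) /\
  exists N, (forall a, N a -> in_dom phi a) /\
  ((forall a, in_dom phi a -> X a -> exists b, in_dom phi b /\
        ((relOc phi a b /\ Y b) \/ (relOcBar phi a b /\ N b))) /\
   ((forall b, in_dom phi b -> ~ (Y b /\ N b)) /\
    ((forall d, in_dom phi d -> Y d /\ relD phi d ->
        forall u, in_dom phi u -> Y u -> ~ relU phi u) /\
     (forall d, in_dom phi d -> Y d /\ relD phi d ->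
        match k with
        | 0 => ~ (d = d)
        | k'.+1 => forall Z, (forall a, Z a -> in_dom phi a) ->
            (forall c, in_dom phi c -> (Z c <-> (relOc phi d c \/
               exists b, in_dom phi b /\ (Y b /\ (relB phi b /\ relOc phi b c))))) ->
            sem phi k' Z
        end)))).

Section Sem.
Variable phi : cnf.
Notation M := (S_of phi).

Lemma LA1 (e1 : nat -> option node) (e2 : nat -> node -> Prop) : @msat M e1 e2 A1 <->
  (forall a, in_dom phi a -> e2 0 a -> exists b, in_dom phi b /\
        ((relOc phi a b /\ e2 1 b) \/ (relOcBar phi a b /\ e2 2 b))).
Proof.
rewrite /A1 msat_all; split => H a Ha; move: (H a Ha);
  rewrite msat_imp /= /upd /= ex_some.
  move=> H1 H2; case: (H1 H2) => b [Hb Hb']; exists b; split => //.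
by move: Hb'; rewrite !msat_and /= !ex_some2 !ex_some.
move=> H1 H2; case: (H1 H2) => b [Hb Hb']; exists b; split => //.
by rewrite !msat_and /= !ex_some2 !ex_some.
Qed.

Lemma LA2 (e1 : nat -> option node) (e2 : nat -> node -> Prop) : @msat M e1 e2 A2 <->
  (forall b, in_dom phi b -> ~ (e2 1 b /\ e2 2 b)).
Proof.
rewrite /A2 msat_all; split => H a Ha; move: (H a Ha) => /=; rewrite msat_and /= /upd /= !ex_some //.
Qed.

Lemma LA3 (e1 : nat -> option node) (e2 : nat -> node -> Prop) : @msat M e1 e2 A3 <->
  (forall d, in_dom phi d -> e2 1 d /\ relD phi d ->
        forall u, in_dom phi u -> e2 1 u -> ~ relU phi u).
Proof.
rewrite /A3 msat_all; split => H a Ha; move: (H a Ha); rewrite msat_imp msat_and msat_all /= /upd /= !ex_some.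
  move=> H1 H2 u Hu; move: (H1 H2 u Hu); rewrite msat_imp /= !ex_some //.
move=> H1 H2 u Hu; rewrite msat_imp /= !ex_some; exact: H1.
Qed.

Lemma LA4 (e1 : nat -> option node) (e2 : nat -> node -> Prop) r : @msat M e1 e2 (A4 r) <->
  (forall d, in_dom phi d -> e2 1 d /\ relD phi d -> @msat M (upd e1 2 (Some d)) e2 r).
Proof.
rewrite /A4 msat_all; split => H a Ha; move: (H a Ha); rewrite msat_imp msat_and /= /upd /= !ex_some //.
Qed.

Lemma LZ (e1 : nat -> option node) (e2 : nat -> node -> Prop) d :
  @msat M (upd e1 2 (Some d)) e2 Zdef <->
  (forall c, in_dom phi c -> (e2 0 c <-> (relOc phi d c \/
               exists b, in_dom phi b /\ (e2 1 b /\ (relB phi b /\ relOc phi b c))))).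
Proof.
rewrite /Zdef msat_all; split => H a Ha; move: (H a Ha); rewrite msat_iff /= /upd /= !ex_some !ex_some2.
  move=> [H1 H2]; split => H3.
    case: (H1 H3) => [|[b [Hb]]]; [by left|]; rewrite !msat_and /= !ex_some !ex_some2 => Hb'.
    by right; exists b.
  apply: H2; case: H3 => [|[b [Hb Hb']]]; [by left|right; exists b; split => //].
  by rewrite !msat_and /= !ex_some !ex_some2.
move=> [H1 H2]; split => H3.
  case: (H1 H3) => [|[b [Hb Hb']]]; [by left|right; exists b; split => //].
  by rewrite !msat_and /= !ex_some !ex_some2.
apply: H2; case: H3 => [|[b [Hb]]]; [by left|]; rewrite !msat_and /= !ex_some !ex_some2 => Hb'.
by right; exists b.
Qed.

Lemma msat_xi k (e1 : nat -> option node) (e2 : nat -> node -> Prop) :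
  @msat M e1 e2 (xi k) <-> exists Y, (forall a, Y a -> in_dom phi a) /\
    exists N, (forall a, N a -> in_dom phi a) /\
    @msat M e1 (upd (upd e2 1 Y) 2 N) (MAnd A1 (MAnd A2 (MAnd A3 (A4
     match k with
     | 0 => MNeg (MEq 2 2)
     | k'.+1 => MAllS 0 (MImp Zdef (xi k'))
     end)))).
Proof. by case: k. Qed.

Lemma xi_sem k : forall (e1 : nat -> option node) (e2 : nat -> node -> Prop),
  @msat M e1 e2 (xi k) <-> sem phi k (e2 0).
Proof.
elim: k => [|k IH] e1 e2; rewrite msat_xi;
  split => -[Y [HY [N [HN H]]]]; exists Y; (split; [exact: HY|]); exists N; (split; [exact: HN|]);
  move: H; rewrite !msat_and LA1 LA2 LA3 LA4 /upd /=;
  move=> [H1 [H2 [H3 H4]]]; (split; [exact H1|split; [exact H2|split; [exact H3|]]]) => d Hd HYd; move: (H4 d Hd HYd).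
- by rewrite /= !ex_some2.
- by rewrite /= !ex_some2.
- rewrite msat_allS => H Z HZ HZd; move: (H Z HZ); rewrite msat_imp IH /upd /=; apply.
  by move: HZd; rewrite (LZ _ _ d) /upd /=.
- move=> H; rewrite msat_allS => Z HZ; rewrite msat_imp IH => HZd; rewrite /upd /=; apply: H => //.
  by move: HZd; rewrite (LZ _ _ d) /upd /=.
Qed.

End Sem.

Transparent MAnd MImp MAll MAllS MIff.
Lemma len_xi k : mso_len (xi k) = 76 + 120 * k.
Proof.
elim: k => [|k IH] //.
rewrite [LHS]/= IH mulnS. rewrite -!plusE -!multE. lia.
Qed.
Lemma fv1_xi k : fv1 (xi k) = [::].
Proof. by elim: k => [|k IH] //=; rewrite IH. Qed.
Lemma fv2_xi k : fv2 (xi k) = [:: 0].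
Proof. by elim: k => [|k IH] //=; rewrite IH. Qed.
Opaque MAnd MImp MAll MAllS MIff.

Lemma occ_step phi p k o1 d1 o d : occ phi p = Some (o1, d1) ->
  occ phi (rcons p k) = Some (o, d) -> exists d2, step o1 k = Some (o, d2) /\ d = d1 + d2.
Proof.
move=> H /occ_rcons_inv [o' [d1' [d2 [H' [Hs ->]]]]].
by rewrite H in H'; case: H' => ? ?; subst; exists d2.
Qed.

Lemma step_cl c j o d : step (OCl c) j = Some (o, d) ->
  j < size c /\ o = OLit (nth (LPos 0) c j) /\ d = 0.
Proof. by rewrite /=; case: ifP => // Hj [<- <-]. Qed.

Lemma step_box cb k o d : step (OLit (LBox cb)) k = Some (o, d) -> o = OCl cb /\ d = 1.
Proof. by case: cb => //= a cb; case: ifP => // _ [<- <-]. Qed.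

Lemma step_dia f k o d : step (OLit (LDia f)) k = Some (o, d) ->
  k < size f /\ o = OCl (nth [::] f k) /\ d = 1.
Proof. by rewrite /=; case: ifP => // Hj [<- <-]. Qed.

Lemma step_lit l k o d : step (OLit l) k = Some (o, d) -> d = 1.
Proof.
case: l => [q|q|cb|f] //.
  by case/step_box => _ ->.
by case/step_dia => _ [_ ->].
Qed.

Section Main.
Variable phi : cnf.

Lemma relOc_lt r e : relOc phi (NLt r) e ->
  exists k c d, e = NCl (rcons r k) /\ occ phi (rcons r k) = Some (OCl c, d).
Proof.
case=> [[p [j [//]]]|[[p [j [q [d [//]]]]]|[r0 [k [[<-] [-> [_ [c [d H]]]]]]]]].
by exists k, c, d.
Qed.

Lemma relOc_cl p b : relOc phi (NCl p) b ->
  (exists j, b = NLt (rcons p j) /\ is_mlit phi (rcons p j)) \/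
  (exists j q d, b = NVar q /\ occ phi (rcons p j) = Some (OLit (LPos q), d)).
Proof.
case=> [[p0 [j [[<-] [-> [_ H]]]]]|[[p0 [j [q [d [[<-] [-> [_ H]]]]]]]|[r0 [k [//]]]]].
  by left; exists j.
by right; exists j, q, d.
Qed.

Lemma relOcBar_cl p b : relOcBar phi (NCl p) b ->
  exists j q d, b = NVar q /\ occ phi (rcons p j) = Some (OLit (LNeg q), d).
Proof. by case=> [p0 [j [q [d [[<-] [-> [_ H]]]]]]]; exists j, q, d. Qed.

Lemma dep_lemma K (S : node -> Prop) :
  (forall e, S e -> exists p c dd, e = NCl p /\ occ phi p = Some (OCl c, dd) /\
                                   md_cnf phi <= dd + K) ->
  forall p j o dd, S (NCl p) -> occ phi (rcons p j) = Some (o, dd) ->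
      md_cnf phi <= dd + K.
Proof.
move=> HS p j o dd Sp Hr; case: (HS _ Sp) => p0 [c0 [dd0 [[Ep] [Hp Hmd]]]]; subst p0.
by case: (occ_step Hp Hr) => d2 [/step_cl [_ [_ ->]] ->]; rewrite addn0.
Qed.

Definition Yc (S : node -> Prop) (W : Type) (R : W -> W -> Prop) (V : nat -> W -> Prop) (w : W)
  (a : node) : Prop :=
  in_dom phi a /\ match a with
     | NVar q => V q w
     | NLt r => exists p j l dd, r = rcons p j /\ S (NCl p) /\
                 occ phi r = Some (OLit l, dd) /\ holds R V w (tr_lit l)
     | NCl _ => False end.
Definition Nc (W : Type) (V : nat -> W -> Prop) (w : W) (a : node) : Prop :=
  in_dom phi a /\ match a with
     | NVar q => ~ V q w
     | _ => False end.

Section Conds.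
Variables (S : node -> Prop) (W : Type) (R : W -> W -> Prop) (V : nat -> W -> Prop) (w : W).
Hypothesis HS : forall e, S e -> exists p c dd, e = NCl p /\ occ phi p = Some (OCl c, dd).
Hypothesis Htr : forall p c dd, S (NCl p) -> occ phi p = Some (OCl c, dd) -> holds R V w (tr_clause c).

Lemma cond1 : forall a, in_dom phi a -> S a -> exists b, in_dom phi b /\
        ((relOc phi a b /\ Yc S R V w b) \/ (relOcBar phi a b /\ Nc V w b)).
Proof.
move=> a Ha Sa; case: (HS Sa) => p [c [dd [Ea Hp]]]; subst a.
have := Htr Sa Hp; rewrite /tr_clause (holds_disj R V (LPos 0)) => -[j [Hj Hl]].
have Hs : step (OCl c) j = Some (OLit (nth (LPos 0) c j), 0) by rewrite /= Hj.
have Hr := occ_rcons Hp Hs; rewrite addn0 in Hr.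
have Hcl : is_cl phi p by exists c, dd.
move: Hr Hl; case: (nth (LPos 0) c j) => [q|q|cb|f] Hr Hl.
- have Hq : in_dom phi (NVar q) by exists (rcons p j), dd; left.
  exists (NVar q); split => //; left; split; last by split.
  by right; left; exists p, j, q, dd.
- have Hq : in_dom phi (NVar q) by exists (rcons p j), dd; right.
  exists (NVar q); split => //; right; split; last by split.
  by exists p, j, q, dd.
- have Hm : is_mlit phi (rcons p j) by left; exists cb, dd.
  exists (NLt (rcons p j)); split => //; left; split.
    by left; exists p, j.
  by split => //; exists p, j, (LBox cb), dd.
- have Hm : is_mlit phi (rcons p j) by right; exists f, dd.
  exists (NLt (rcons p j)); split => //; left; split.
    by left; exists p, j.
  by split => //; exists p, j, (LDia f), dd.
Qed.

Lemma cond2 : forall b, in_dom phi b -> ~ (Yc S R V w b /\ Nc V w b).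
Proof. by move=> [p|r|q] _ [[_ Y] [_ N]]. Qed.

Lemma cond3 : forall d, in_dom phi d -> Yc S R V w d /\ relD phi d ->
        forall u, in_dom phi u -> Yc S R V w u -> ~ relU phi u.
Proof.
move=> [p|r|q] _ [[_ Yd] Dd] // [p'|r'|q'] _ [_ Yu] Uu //.
case: Yd => p0 [j [l [dd [_ [_ [Hr Hl]]]]]].
case: Dd => f [dd' Hf]; rewrite Hr in Hf; case: Hf => ??; subst.
case: Hl => v [Rwv _].
case: Yu => p1 [j1 [l1 [dd1 [_ [_ [Hr1 Hl1]]]]]].
case: Uu => dd2 Hu; rewrite Hr1 in Hu; case: Hu => ??; subst.
exact: (Hl1 v Rwv).
Qed.

End Conds.

Lemma complete k : forall (S : node -> Prop) (W : Type) (R : W -> W -> Prop) V w,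
  (forall e, S e -> exists p c dd, e = NCl p /\ occ phi p = Some (OCl c, dd) /\
                                   md_cnf phi <= dd + k) ->
  (forall p c dd, S (NCl p) -> occ phi p = Some (OCl c, dd) -> holds R V w (tr_clause c)) ->
  sem phi k S.
Proof.
elim: k => [|k IH] S W R V w HS Htr;
  (have HS' : forall e, S e -> exists p c dd, e = NCl p /\ occ phi p = Some (OCl c, dd) by
    move=> e /HS [p [c [dd [? [? _]]]]]; exists p, c, dd);
  have Hdep := dep_lemma HS;
  exists (Yc S R V w); (split; [by move=> a []|]);
  exists (Nc V w); (split; [by move=> a []|]);
  (split; [exact: cond1|]); (split; [exact: cond2|]); (split; [exact: cond3|]);
  move=> [p|r|q] _ [[_ Yd] Dd] //;
  case: Yd => p0 [j [l [dd [Er [Sp [Hr Hl]]]]]];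
  case: Dd => f [dd' Hf]; rewrite Hr in Hf; case: Hf => ??; subst.
- move: (Hdep _ _ _ _ Sp Hr); rewrite addn0 leqNgt (dia_depth Hr) //.
- move=> Z HZ HZd.
  case: Hl => v [Rwv Hv].
  apply: (IH Z W R V v).
  + move=> e Ze; have He := HZ e Ze; case: ((HZd e He).1 Ze).
    * case/relOc_lt => k0 [c1 [d1 [-> Hc]]].
      exists (rcons (rcons p0 j) k0), c1, d1; split => //; split => //.
      case: (occ_step Hr Hc) => d2 [/step_lit -> ->].
      by rewrite -addnA add1n; apply: Hdep Sp Hr.
    * case=> [[pb|rb|qb]] [Hb [[_ Yb] [Bb Ob]]] //.
      case: Yb => p1 [j1 [l1 [dd1 [Erb [Sp1 [Hr1 Hl1]]]]]]; subst rb.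
      case/relOc_lt: Ob => k0 [c1 [d1 [-> Hc]]].
      exists (rcons (rcons p1 j1) k0), c1, d1; split => //; split => //.
      case: (occ_step Hr1 Hc) => d2 [/step_lit -> ->].
      by rewrite -addnA add1n; apply: Hdep Sp1 Hr1.
  + move=> p1 c1 d1 Zp Hp1.
    have He : in_dom phi (NCl p1) by exists c1, d1.
    case: ((HZd _ He).1 Zp).
    * case/relOc_lt => k0 [c2 [d2 [[Ep] Hc]]]; subst p1.
      rewrite Hc in Hp1; case: Hp1 => ??; subst.
      case: (occ_step Hr Hc) => d3 [/step_dia [Hk [[->] _]] _].
      exact: ((holds_conj R V [::] tr_clause f v).1 Hv k0 Hk).
    * case=> [[pb|rb|qb]] [Hb [[_ Yb] [Bb Ob]]] //.
      case: Yb => p2 [j2 [l2 [dd2 [Erb [Sp2 [Hr2 Hl2]]]]]]; subst rb.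
      case: Bb => cb [ddb Hb2]; rewrite Hr2 in Hb2; case: Hb2 => ??; subst.
      case/relOc_lt: Ob => k0 [c2 [d2 [[Ep] Hc]]]; subst p1.
      rewrite Hc in Hp1; case: Hp1 => ??; subst.
      case: (occ_step Hr2 Hc) => d3 [/step_box [[->] _] _].
      exact: (Hl2 v Rwv).
Qed.


Definition Rc (Y : node -> Prop) (Rm : node -> seq node -> seq node -> Prop)
  (w v : seq node) : Prop :=
  (w = [::] /\ exists d, v = [:: d] /\ in_dom phi d /\ Y d /\ relD phi d) \/
  (exists d w0 v0, w = d :: w0 /\ v = d :: v0 /\ Rm d w0 v0).
Definition Vc (Y : node -> Prop) (Vm : node -> nat -> seq node -> Prop) q (w : seq node) : Prop :=
  match w with [::] => Y (NVar q) | d :: w0 => Vm d q w0 end.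

Lemma transfer Y Rm Vm f d w0 :
  holds (Rc Y Rm) (Vc Y Vm) (d :: w0) f <-> holds (Rm d) (Vm d) w0 f.
Proof.
elim: f w0 => [q||g IH|g IH h IH2|g IH|g IH] w0 /=.
- done.
- done.
- by rewrite IH.
- by rewrite IH IH2.
- split => -[v [Rv Hv]].
    case: Rv => [[//]|[d' [w0' [v0 [[??] [? Rv]]]]]]; subst.
    by exists v0; split => //; rewrite -IH.
  exists (d :: v); split; last by rewrite IH.
  by right; exists d, w0, v.
- split => Hb v Rv.
    by apply/IH; apply: Hb; right; exists d, w0, v.
  case: Rv => [[//]|[d' [w0' [v0 [[??] [? Rv]]]]]]; subst.
  by rewrite IH; apply: Hb.
Qed.

Definition Zd (Y : node -> Prop) d c : Prop :=
  in_dom phi c /\ (relOc phi d c \/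
     exists b, in_dom phi b /\ (Y b /\ (relB phi b /\ relOc phi b c))).

Lemma assemble (S Y N : node -> Prop) :
  (forall a, in_dom phi a -> S a -> exists b, in_dom phi b /\
        ((relOc phi a b /\ Y b) \/ (relOcBar phi a b /\ N b))) ->
  (forall b, in_dom phi b -> ~ (Y b /\ N b)) ->
  (forall d, in_dom phi d -> Y d /\ relD phi d ->
        forall u, in_dom phi u -> Y u -> ~ relU phi u) ->
  forall (Rm : node -> seq node -> seq node -> Prop) (Vm : node -> nat -> seq node -> Prop),
  (forall d, in_dom phi d -> Y d -> relD phi d -> forall p c dd, Zd Y d (NCl p) ->
      occ phi p = Some (OCl c, dd) -> holds (Rm d) (Vm d) [::] (tr_clause c)) ->
  exists (R : seq node -> seq node -> Prop) (V : nat -> seq node -> Prop),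
    forall p c dd, S (NCl p) -> occ phi p = Some (OCl c, dd) -> holds R V [::] (tr_clause c).
Proof.
move=> H1 H2 H3 Rm Vm Hm; exists (Rc Y Rm), (Vc Y Vm) => p c dd Sp Hp.
have Hdom : in_dom phi (NCl p) by exists c, dd.
rewrite /tr_clause (holds_disj (Rc Y Rm) (Vc Y Vm) (LPos 0)).
case: (H1 _ Hdom Sp) => b [Hb [[Ob Yb]|[Ob Nb]]].
- case/relOc_cl: Ob => [[j [Eb Hmm]]|[j [q [d [Eb Hq]]]]]; subst b.
  + case: Hmm => [[cb [d Hr]]|[f [d Hr]]];
      case: (occ_step Hp Hr) => d2 [/step_cl [Hj [[Hn] _]] _]; exists j; split => //; rewrite -Hn /=.
    * move=> v [[_ [d' [-> [Hd' [Yd' Dd']]]]]|[? [? [? [//]]]]].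
      rewrite transfer.
      case: cb Hr Hn => [|l0 cb] Hr Hn.
        by case: (H3 d' Hd' (Logic.conj Yd' Dd') _ Hb Yb); exists d.
      have Hs : step (OLit (LBox (l0 :: cb))) 0 = Some (OCl (l0 :: cb), 1) by [].
      have Hc := occ_rcons Hr Hs.
      apply: (Hm d' Hd' Yd' Dd' _ _ _ _ Hc); split; first by exists (l0 :: cb), (d + 1).
      right; exists (NLt (rcons p j)); split => //; split => //; split.
        by exists (l0 :: cb), d.
      right; right; exists (rcons p j), 0; split => //; split => //; split.
        by left; exists (l0 :: cb), d.
      by exists (l0 :: cb), (d + 1).
    * have Dd : relD phi (NLt (rcons p j)) by exists f, d.
      exists [:: NLt (rcons p j)]; split.
        by left; split => //; exists (NLt (rcons p j)).
      rewrite transfer.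
      apply/(holds_conj (Rm (NLt (rcons p j))) (Vm (NLt (rcons p j))) [::] tr_clause) => k0 Hk0.
      have Hs : step (OLit (LDia f)) k0 = Some (OCl (nth [::] f k0), 1) by rewrite /= Hk0.
      have Hc := occ_rcons Hr Hs.
      apply: (Hm _ Hb Yb Dd _ _ _ _ Hc); split; first by exists (nth [::] f k0), (d + 1).
      left; right; right; exists (rcons p j), k0; split => //; split => //; split.
        by right; exists f, d.
      by exists (nth [::] f k0), (d + 1).
  + case: (occ_step Hp Hq) => d2 [/step_cl [Hj [[Hn] _]] _]; exists j; split => //.
    by rewrite -Hn.
- case/relOcBar_cl: Ob => j [q [d [Eb Hq]]]; subst b.
  case: (occ_step Hp Hq) => d2 [/step_cl [Hj [[Hn] _]] _]; exists j; split => //.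
  by rewrite -Hn /= => HY; apply: (H2 _ Hb).
Qed.

Lemma sound k : forall S, sem phi k S ->
  exists (R : seq node -> seq node -> Prop) (V : nat -> seq node -> Prop),
    forall p c dd, S (NCl p) -> occ phi p = Some (OCl c, dd) -> holds R V [::] (tr_clause c).
Proof.
elim: k => [|k IH] S [Y [HY [N [HN [H1 [H2 [H3 H4]]]]]]].
- apply: (assemble H1 H2 H3 (Rm := fun _ _ _ => False) (Vm := fun _ _ _ => False)).
  by move=> d Hd Yd Dd; case: (H4 d Hd (Logic.conj Yd Dd)).
- have Hex : forall d, exists RV : (seq node -> seq node -> Prop) * (nat -> seq node -> Prop),
      in_dom phi d -> Y d -> relD phi d -> forall p c dd, Zd Y d (NCl p) ->
      occ phi p = Some (OCl c, dd) -> holds RV.1 RV.2 [::] (tr_clause c).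
    move=> d; case: (classic (in_dom phi d /\ Y d /\ relD phi d)) => [[Hd [Yd Dd]]|Hn].
      have Hz := H4 d Hd (Logic.conj Yd Dd) (Zd Y d) (fun a Ha => proj1 Ha).
      have [R [V HRV]] : exists (R : seq node -> seq node -> Prop) (V : nat -> seq node -> Prop),
        forall p c dd, Zd Y d (NCl p) -> occ phi p = Some (OCl c, dd) -> holds R V [::] (tr_clause c).
        apply: IH; apply: Hz => c Hc; split; first by case.
        by move=> H; split.
      by exists (R, V) => _ _ _; exact: HRV.
    by exists ((fun _ _ => False), (fun _ _ => False)) => Hd Yd Dd; case: Hn.
  apply: (assemble H1 H2 H3
    (Rm := fun d => (proj1_sig (constructive_indefinite_description _ (Hex d))).1)
    (Vm := fun d => (proj1_sig (constructive_indefinite_description _ (Hex d))).2)).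
  move=> d Hd Yd Dd.
  exact: (proj2_sig (constructive_indefinite_description _ (Hex d)) Hd Yd Dd).
Qed.

End Main.

Theorem lemma1 :
  exists c : nat, forall i : nat, exists xi : mso,
    mso_len xi <= c * i.+1 /\ only_free_X xi /\
    forall phi : cnf, wf_cnf phi -> i <= md_cnf phi ->
    forall C : seq node,
      (forall e, e \in C -> relCl phi e /\ relLv phi i e) ->
      (satisfiable (CNF_of phi C) <-> models_with phi xi C).
Proof.
exists 200 => i; exists (xi i); split; [|split].
- rewrite len_xi mulnS; apply/leP; rewrite -!plusE -!multE; lia.
- by split; [exact: fv1_xi | rewrite fv2_xi].
- move=> phi _ _ C HC; rewrite /models_with xi_sem /=; split.
  + move=> [W [R [V [w Hw]]]].
    apply: (@complete phi i (fun e => is_true (e \in C)) W R V w).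
    * move=> e /HC [Hcl Hlv]; case: e Hcl Hlv => // p _ [c [dd [Hp Hi]]].
      exists p, c, dd; split => //; split => //.
      by rewrite -leq_subLR Hi.
    * move=> p c dd Hin Hp; move: Hw; rewrite /CNF_of (holds_conj R V (NVar 0)) => Hw.
      have /(nthP (NVar 0)) [j Hj Ej] := Hin.
      by have := Hw j Hj; rewrite Ej /= Hp.
  + move/sound => [R [V HRV]]; exists (seq node), R, V, [::].
    rewrite /CNF_of (holds_conj R V (NVar 0)) => j Hj.
    have Hin := mem_nth (NVar 0) Hj.
    case: (HC _ Hin); move: Hin.
    case: (nth (NVar 0) C j) => // p Hin _ [c [dd [Hp _]]].
    by rewrite /= Hp; apply: (HRV p c dd Hin Hp).
Qed.
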